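(* Consider the following slotted system without diversity. There are $N\ge 2$ users and time slots $t=1,\dots,T$. In each slot a base station (BS) schedules exactly one user, using the uniform randomized algorithm: in every slot, independently of everything else, each user is scheduled with probability $\frac1N$. An adversary chooses a blocking matrix $\sigma=(\sigma_i(t))\in\{0,1\}^{N\times T}$, where $\sigma_i(t)=0$ means that the channel to user $i$ is blocked in slot $t$. The matrix $\sigma$ is feasible if $\sum_{i=1}^N\sum_{t=1}^T(1-\sigma_i(t))\le \alpha T$ and $\sum_{i=1}^N(1-\sigma_i(t))\le 1$ for every $t$, where $0<\alpha<1$ and $\alpha T$ is an integer. The ages satisfy $a_i(1)=1$; if user $i$ is scheduled in slot $t$ and $\sigma_i(t)=1$ then $a_i(t+1)=1$, and otherwise $a_i(t+1)=a_i(t)+1$. The average age is $\Delta^{\sigma}=\frac1T\sum_{t=1}^T\frac1N\sum_{i=1}^N\mathbb{E}[a_i(t)]$. Then there exists a feasible blocking matrix maximizing $\Delta^{\sigma}$ over all feasible $\sigma$ whose blocked slots all belong to a single user and form a set of consecutive time slots. Moreover, the blocked user may be chosen arbitrarily.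
   Context: The expectation is over the random scheduling choices of the BS. The adversary's matrix $\sigma$ is fixed (deterministic). *)

(* Defs.v *)
From HB Require Import structures.
From mathcomp Require Import all_boot all_order all_algebra.
Set Implicit Arguments. Unset Strict Implicit. Unset Printing Implicit Defensive.
Import Order.TTheory GRing.Theory Num.Theory.
Local Open Scope ring_scope.

(* Slots are 0-indexed: slot t : 'I_T corresponds to the paper's slot t+1.
   A blocking matrix sigma : 'M[bool]_(N,T); sigma i t = true means
   sigma_i(t+1) = 1 (not blocked), false means blocked.
   A schedule u : {ffun 'I_T -> 'I_N} gives the user scheduled in each slot. *)

(* age u sigma i k = a_i(k+1) (paper's indexing), for k <= T. *)
Fixpoint age (N T : nat) (u : {ffun 'I_T -> 'I_N}) (sigma : 'M[bool]_(N, T))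
  (i : 'I_N) (k : nat) : nat :=
  match k with
  | 0 => 1
  | k'.+1 =>
    match @insub nat (fun n => n < T)%N 'I_T k' with
    | Some t => if (u t == i) && sigma i t then 1 else (age u sigma i k').+1
    | None => (age u sigma i k').+1
    end
  end.

(* E[a_i(t+1)]: expectation over the uniform random schedule, where every
   slot independently schedules each user with probability 1/N, i.e. each
   schedule u has probability (1/N)^T. *)
Definition exp_age (N T : nat) (sigma : 'M[bool]_(N, T)) (i : 'I_N) (t : 'I_T) : rat :=
  \sum_(u : {ffun 'I_T -> 'I_N}) (N%:R^-1) ^+ T * (age u sigma i t)%:R.

Definition avg_age (N T : nat) (sigma : 'M[bool]_(N, T)) : rat :=
  T%:R^-1 * \sum_(t < T) (N%:R^-1 * \sum_(i < N) exp_age sigma i t).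

Definition feasible (N T : nat) (alpha : rat) (sigma : 'M[bool]_(N, T)) : Prop :=
  ((\sum_(i < N) \sum_(t < T) (~~ sigma i t : nat))%:R <= alpha * T%:R)
  /\ (forall t : 'I_T, (\sum_(i < N) (~~ sigma i t : nat) <= 1)%N).

(* Main.v *)
Require Import Defs.
From mathcomp Require Import all_boot all_order all_algebra.
From mathcomp Require Import zify ring lra.
Set Implicit Arguments. Unset Strict Implicit. Unset Printing Implicit Defensive.
Import Order.TTheory GRing.Theory Num.Theory.
Local Open Scope ring_scope.

Definition cnt (w : nat -> bool) (a t : nat) : nat := (\sum_(a <= s < t) (w s : nat))%N.

Section Gen.
Variable p : rat.
Hypothesis p0 : 0 <= p.
Hypothesis p1 : p <= 1.
Variable T : nat.

Definition Phi (w : nat -> bool) : rat :=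
  \sum_(t < T) \sum_(a < t.+1) p ^+ cnt w a t.

Lemma Phi_ext w1 w2 : (forall s, (s < T)%N -> w1 s = w2 s) -> Phi w1 = Phi w2.
Proof.
move=> H; apply: eq_bigr => t _; apply: eq_bigr => a _.
rewrite /cnt; congr (_ ^+ _); apply: eq_big_nat => s /andP[_ hs].
by rewrite H // (ltn_trans hs).
Qed.

Lemma Phi_eq w1 w2 : w1 =1 w2 -> Phi w1 = Phi w2.
Proof. by move=> H; apply: Phi_ext => s _. Qed.

Lemma ineq4 e d1 d2 :
  p ^+ (e + d2) + p ^+ (e + d1) <= p ^+ (e + d1 + d2) + p ^+ e.
Proof.
rewrite -!addnA !exprD.
have he : 0 <= p ^+ e by apply: exprn_ge0.
have h1 : 0 <= p ^+ d1 by apply: exprn_ge0.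
have h2 : 0 <= p ^+ d2 by apply: exprn_ge0.
have h1' : p ^+ d1 <= 1 by apply: exprn_ile1.
have h2' : p ^+ d2 <= 1 by apply: exprn_ile1.
have : 0 <= (1 - p ^+ d1) * (1 - p ^+ d2) by apply: mulr_ge0; lra.
move=> H; have := mulr_ge0 he H. nra.
Qed.

Lemma cnt_split (w : nat -> bool) (f g : nat -> bool) a t :
  (forall s, (a <= s < t)%N -> (w s : nat) = f s + g s)%N ->
  cnt w a t = (cnt f a t + cnt g a t)%N.
Proof. by move=> H; rewrite /cnt -big_split /=; apply: eq_big_nat. Qed.

Lemma supermod w1 w2 :
  (forall s, (s < T)%N -> w1 s || w2 s) ->
  Phi w1 + Phi w2 <= Phi (fun _ => true) + Phi (fun s => w1 s && w2 s).
Proof.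
move=> H; rewrite -!big_split /=; apply: ler_sum => t _.
rewrite -!big_split /=; apply: ler_sum => a _.
set e := cnt (fun s => w1 s && w2 s) a t.
set d2 := cnt (fun s => w1 s && ~~ w2 s) a t.
set d1 := cnt (fun s => ~~ w1 s && w2 s) a t.
have E1 : cnt w1 a t = (e + d2)%N.
  by apply: cnt_split => s _; case: (w1 s); case: (w2 s).
have E2 : cnt w2 a t = (e + d1)%N.
  by apply: cnt_split => s _; case: (w1 s); case: (w2 s).
have E3 : cnt (fun _ => true) a t = (e + d1 + d2)%N.
  rewrite -E2 addnC; apply: cnt_split => s /andP[_ hs].
  have := H s (ltn_trans hs (ltn_ord t)).
  by case: (w1 s); case: (w2 s).
rewrite E1 E2 E3; exact: ineq4.
Qed.

Definition AW (ws : nat -> nat -> bool) n s := \big[andb/true]_(i < n) ws i s.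

Lemma merge (ws : nat -> nat -> bool) n :
  (forall s, (s < T)%N -> forall i1 i2, (i1 < n)%N -> (i2 < n)%N -> i1 != i2 ->
     ws i1 s || ws i2 s) ->
  \sum_(i < n) Phi (ws i) + Phi (fun _ => true)
    <= n%:R * Phi (fun _ => true) + Phi (AW ws n).
Proof.
elim: n => [|n IH] H.
  have -> : Phi (AW ws 0) = Phi (fun _ => true).
    by apply: Phi_eq => s; rewrite /AW big_ord0.
  by rewrite big_ord0 add0r mul0r add0r.
rewrite big_ord_recr /=.
have IH' := IH (fun s hs i1 i2 h1 h2 => H s hs i1 i2 (ltnW h1) (ltnW h2)).
have Hd : forall s, (s < T)%N -> AW ws n s || ws n s.
  move=> s hs; case E: (ws n s); first by rewrite orbT.
  rewrite orbF /AW; apply big_ind => //; first by move=> x y -> ->.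
  move=> i _; have := H s hs i n (ltnW (ltn_ord i)) (ltnSn n).
  by rewrite E orbF (ltn_eqF (ltn_ord i)); apply.
have Hs := supermod Hd.
have -> : Phi (AW ws n.+1) = Phi (fun s => AW ws n s && ws n s).
  by apply: Phi_eq => s; rewrite /AW big_ord_recr.
rewrite -natr1 mulrDl mul1r; lra.
Qed.
End Gen.

Lemma sym_sum (f : nat -> nat -> rat) n : (forall a b, f a b = f b a) ->
  \sum_(a < n) \sum_(b < n) f a b + \sum_(a < n) f a a =
  2%:R * \sum_(a < n) \sum_(b < a.+1) f a b.
Proof.
move=> fs; elim: n => [|n IH]; first by rewrite !big_ord0 mulr0 addr0.
rewrite big_ord_recr /= (big_ord_recr n (fun a => f a a)) /=.
rewrite (big_ord_recr n (fun a : 'I_n.+1 => \sum_(b < a.+1) f a b)) /=.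
rewrite (eq_bigr (fun a : 'I_n => \sum_(b < n) f a b + f a n)); last first.
  by move=> a _; rewrite big_ord_recr.
rewrite big_split /= big_ord_recr /=.
have -> : \sum_(i < n) f i n = \sum_(i < n) f n i by apply: eq_bigr => i _; rewrite fs.
set A := \sum_(i < n) \sum_(j < n) f i j.
set B := \sum_(i < n) f n i.
set C := \sum_(i < n) f i i.
set D := \sum_(i < n) \sum_(b < i.+1) f i b.
have : A + C = 2%:R * D by rewrite IH.
lra.
Qed.

Definition dist (x y : nat) : nat := (x - y + (y - x))%N.

Lemma distC x y : dist x y = dist y x.
Proof. by rewrite /dist addnC. Qed.

Section Rank.
Variable p : rat.
Hypothesis p0 : 0 <= p.
Hypothesis p1 : p <= 1.

Definition Rk (W : nat -> bool) c := cnt W 0 c.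
Definition base (W : nat -> bool) c := (c == 0)%N || W c.-1.

Lemma Rk_mono W a b : (b <= a)%N -> (Rk W b <= Rk W a)%N.
Proof. by move=> h; rewrite /Rk /cnt (big_cat_nat (leq0n b) h) /= leq_addr. Qed.

Lemma cnt_Rk W a t : (a <= t)%N -> cnt W a t = (Rk W t - Rk W a)%N.
Proof. by move=> h; rewrite /Rk /cnt (big_cat_nat (leq0n a) h) /= addKn. Qed.

Lemma Rk_le W c : (Rk W c <= c)%N.
Proof.
rewrite /Rk /cnt; apply: (@leq_trans (\sum_(0 <= i < c) 1)%N).
  by apply: leq_sum => i _; apply: leq_b1.
by rewrite sum_nat_const_nat muln1 subn0.
Qed.

Lemma Rk_S W c : Rk W c.+1 = (Rk W c + W c)%N.
Proof. by rewrite /Rk /cnt big_nat_recr. Qed.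

Lemma base_sum W (F : nat -> rat) n :
  \sum_(c < n.+1 | base W c) F (Rk W c) = \sum_(j < (Rk W n).+1) F j.
Proof.
elim: n => [|n IH].
  by rewrite big_mkcond big_ord1 /= /Rk /cnt big_geq // big_ord1.
rewrite big_mkcond big_ord_recr /=; rewrite big_mkcond in IH; rewrite IH /base /= Rk_S.
case: (W n); last by rewrite addn0 addr0.
by rewrite addn1 [RHS]big_ord_recr.
Qed.

Variable n : nat.
Definition hh W a b := p ^+ dist (Rk W a) (Rk W b).
Definition DD W := \sum_(a < n.+1) \sum_(b < n.+1) hh W a b.
Definition gg m r := \sum_(j < m.+1) p ^+ dist j r.
Definition BB m := \sum_(j < m.+1) \sum_(j' < m.+1) p ^+ dist j j'.

Lemma decomp W : DD W = BB (Rk W n) +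
   2%:R * \sum_(c < n.+1 | ~~ base W c) gg (Rk W n) (Rk W c) +
   \sum_(a < n.+1 | ~~ base W a) \sum_(b < n.+1 | ~~ base W b) hh W a b.
Proof.
rewrite /DD (bigID (fun i : 'I_n.+1 => base W i)) /=.
rewrite (eq_bigr (fun a : 'I_n.+1 => \sum_(b < n.+1 | base W b) hh W a b +
                            \sum_(b < n.+1 | ~~ base W b) hh W a b));
  last by move=> a _; rewrite (bigID (fun i : 'I_n.+1 => base W i)).
rewrite [X in _ + X](eq_bigr (fun a : 'I_n.+1 => \sum_(b < n.+1 | base W b) hh W a b +
                            \sum_(b < n.+1 | ~~ base W b) hh W a b));
  last by move=> a _; rewrite (bigID (fun i : 'I_n.+1 => base W i)).
rewrite !big_split /=.
have -> : \sum_(i < n.+1 | base W i) \sum_(b < n.+1 | base W b) hh W i b = BB (Rk W n).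
  rewrite (eq_bigr (fun i : 'I_n.+1 => (fun x => \sum_(j < (Rk W n).+1) p ^+ dist x j) (Rk W i))).
    exact: (base_sum W (fun x => \sum_(j < (Rk W n).+1) p ^+ dist x j) n).
  by move=> i _; rewrite /hh (base_sum W (fun x => p ^+ dist (Rk W i) x)).
have -> : \sum_(i < n.+1 | base W i) \sum_(b < n.+1 | ~~ base W b) hh W i b =
          \sum_(c < n.+1 | ~~ base W c) gg (Rk W n) (Rk W c).
  rewrite exchange_big /=; apply: eq_bigr => c _.
  by rewrite /hh (base_sum W (fun x => p ^+ dist x (Rk W c))).
have -> : \sum_(i < n.+1 | ~~ base W i) \sum_(b < n.+1 | base W b) hh W i b =
          \sum_(c < n.+1 | ~~ base W c) gg (Rk W n) (Rk W c).
  apply: eq_bigr => c _.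
  rewrite /hh (base_sum W (fun x => p ^+ dist (Rk W c) x)).
  by apply: eq_bigr => j _; rewrite distC.
set X := BB _; set Y := \sum_(c < n.+1 | _) _; set Z := \sum_(i < n.+1 | _) _.
lra.
Qed.


Lemma nb_count W : \sum_(c < n.+1 | ~~ base W c) (1 : rat) = n%:R - (Rk W n)%:R.
Proof.
have H : \sum_(c < n.+1) (1:rat) = \sum_(c < n.+1 | base W c) 1 + \sum_(c < n.+1 | ~~ base W c) 1.
  by rewrite (bigID (fun i : 'I_n.+1 => base W i)).
rewrite sumr_const card_ord in H.
have E : \sum_(c < n.+1 | base W c) (1:rat) = ((Rk W n).+1)%:R.
  have E1 := base_sum W (fun _ => (1:rat)) n.
  by rewrite [in X in _ = X]sumr_const card_ord in E1.
rewrite E in H. move: H. rewrite -!natr1 => H. lra.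
Qed.

Lemma compare W W' rho :
  Rk W' n = Rk W n -> (rho <= Rk W n)%N ->
  (forall j, (j <= Rk W n)%N -> gg (Rk W n) j <= gg (Rk W n) rho) ->
  (forall c, (c < n.+1)%N -> ~~ base W' c -> Rk W' c = rho) ->
  DD W <= DD W'.
Proof.
move=> Em hr hg hc; rewrite !decomp Em.
set m := Rk W n.
have k_eq : \sum_(c < n.+1 | ~~ base W' c) (1 : rat) = \sum_(c < n.+1 | ~~ base W c) (1 : rat).
  by rewrite !nb_count Em.
set k := \sum_(c < n.+1 | ~~ base W c) (1 : rat).
have S1 : \sum_(c < n.+1 | ~~ base W c) gg m (Rk W c) <= gg m rho * k.
  rewrite /k mulr_sumr; apply: ler_sum => c _; rewrite mulr1; apply: hg.
  by apply: Rk_mono; rewrite -ltnS.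
have S1' : \sum_(c < n.+1 | ~~ base W' c) gg m (Rk W' c) = gg m rho * k.
  rewrite /k -k_eq mulr_sumr; apply: eq_bigr => c hb; rewrite mulr1 hc //.
have S2 : \sum_(a < n.+1 | ~~ base W a) \sum_(b < n.+1 | ~~ base W b) hh W a b <= k * k.
  rewrite /k mulr_suml; apply: ler_sum => a _; rewrite mul1r; apply: ler_sum => b _.
  by apply: exprn_ile1.
have S2' : \sum_(a < n.+1 | ~~ base W' a) \sum_(b < n.+1 | ~~ base W' b) hh W' a b = k * k.
  rewrite /k -k_eq mulr_suml; apply: eq_bigr => a ha; rewrite mul1r; apply: eq_bigr => b hb.
  by rewrite /hh !hc // /dist subnn expr0.
rewrite S1' S2'; lra.
Qed.


Lemma Phi_DD W : 2%:R * Phi p n.+1 W = DD W + (n.+1)%:R.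
Proof.
have -> : Phi p n.+1 W = \sum_(t < n.+1) \sum_(a < t.+1) hh W t a.
  apply: eq_bigr => t _; apply: eq_bigr => a _.
  have hat : (a <= t)%N by rewrite -ltnS.
  rewrite /hh cnt_Rk // /dist.
  by have := Rk_mono W hat; rewrite -subn_eq0 => /eqP ->; rewrite addn0.
rewrite -(@sym_sum (fun a b => hh W a b) n.+1); last by move=> x y; rewrite /hh distC.
congr (_ + _).
rewrite (eq_bigr (fun _ => 1)); first by rewrite sumr_const card_ord.
by move=> i _; rewrite /hh /dist subnn expr0.
Qed.

End Rank.

Lemma cnt_compl W n : (cnt W 0 n + cnt (fun s => ~~ W s) 0 n)%N = n.
Proof.
rewrite /cnt -big_split /=.
rewrite (eq_big_nat _ _ (F2 := fun _ => 1%N)); last by move=> i _; case: (W i).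
by rewrite sum_nat_const_nat muln1 subn0.
Qed.

Lemma window_count a b n : (a <= b)%N -> (b <= n)%N ->
  (\sum_(0 <= s < n) ((a <= s) && (s < b) : nat))%N = (b - a)%N.
Proof.
move=> hab hbn.
set f := fun s : nat => (((a <= s) && (s < b))%N : nat).
rewrite (big_cat_nat (leq0n b) hbn) (big_cat_nat (leq0n a) hab) /=.
have E1 : (\sum_(0 <= s < a) f s = 0)%N.
  rewrite (eq_big_nat _ _ (F2 := fun _ => 0%N)) ?sum_nat_const_nat ?muln0 //.
  by move=> i /andP[_ hi]; rewrite /f leqNgt hi.
have E2 : (\sum_(a <= s < b) f s = b - a)%N.
  rewrite (eq_big_nat _ _ (F2 := fun _ => 1%N)) ?sum_nat_const_nat ?muln1 //.
  by move=> i /andP[h1 h2]; rewrite /f h1 h2.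
have E3 : (\sum_(b <= s < n) f s = 0)%N.
  rewrite (eq_big_nat _ _ (F2 := fun _ => 0%N)) ?sum_nat_const_nat ?muln0 //.
  by move=> i /andP[hi _]; rewrite /f ltnNge hi andbF.
by rewrite E1 E2 E3 add0n addn0.
Qed.

Lemma exists_max_nat (f : nat -> rat) n :
  exists j, (j <= n)%N /\ forall j', (j' <= n)%N -> f j' <= f j.
Proof.
elim: n => [|n [j [hj H]]].
  by exists 0%N; split => // j'; rewrite leqn0 => /eqP ->.
case: (leP (f n.+1) (f j)) => h.
  exists j; split; first by apply: leqW.
  by move=> j'; rewrite leq_eqVlt ltnS => /orP[/eqP ->|/H].
exists n.+1; split => // j'; rewrite leq_eqVlt ltnS => /orP[/eqP ->//|/H hj'].
by apply: (le_trans hj'); apply: ltW.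
Qed.

Section Interval.
Variable p : rat.
Hypothesis p0 : 0 <= p.
Hypothesis p1 : p <= 1.

Lemma interval_exists W n : exists rho k,
  [/\ (rho + k <= n)%N, k = (n - Rk W n)%N &
      Phi p n.+1 W <= Phi p n.+1 (fun s => ~~ ((rho <= s) && (s < rho + k))%N)].
Proof.
set m := Rk W n.
have [rho [hr Hr]] := exists_max_nat (gg p m) m.
have hmn : (m <= n)%N by apply: Rk_le.
exists rho, (n - m)%N; split => //; first by lia.
set W' := fun s => ~~ ((rho <= s) && (s < rho + (n - m)))%N.
have Em : Rk W' n = m.
  have := cnt_compl W' n.
  have -> : cnt (fun s => ~~ W' s) 0 n = (n - m)%N.
    rewrite /cnt (eq_big_nat _ _ (F2 := fun s => (((rho <= s) && (s < rho + (n - m)))%N : nat))).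
      by rewrite window_count ?addKn //; [apply: leq_addr | lia].
    by move=> i _; rewrite /W' negbK.
  rewrite /Rk; lia.
have Hc : forall c, (c < n.+1)%N -> ~~ base W' c -> Rk W' c = rho.
  case=> [|c] hc; first by [].
  rewrite /base /= /W' negbK => /andP[h1 h2].
  have hrc : (rho <= c.+1)%N by lia.
  rewrite /Rk /cnt (big_cat_nat (leq0n rho) hrc) /=.
  rewrite (eq_big_nat _ _ (F2 := fun _ => 1%N)); last first.
    by move=> i /andP[_ hi]; rewrite leqNgt hi.
  rewrite [X in (_ + X)%N](eq_big_nat _ _ (F2 := fun _ => 0%N)); last first.
    move=> i /andP[hi1 hi2]; rewrite hi1 /=.
    by rewrite (leq_ltn_trans (_ : i <= c)%N h2).
  by rewrite !sum_nat_const_nat muln1 muln0 addn0 subn0.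
have H2 := @Phi_DD p n W; have H2' := @Phi_DD p n W'.
have := @compare p p0 p1 n W W' rho Em hr Hr Hc.
rewrite -/m in H2 H2'. lra.
Qed.

End Interval.

Section Prob.
Variables N T : nat.
Variable sigma : 'M[bool]_(N, T).
Variable i : 'I_N.

Definition rowf (s : nat) : bool :=
  match (insub s : option 'I_T) with Some t => sigma i t | None => true end.

Lemma rowfE (t : 'I_T) : rowf t = sigma i t.
Proof. by rewrite /rowf valK. Qed.

Lemma age_sum (u : {ffun 'I_T -> 'I_N}) k : (k <= T)%N ->
  (age u sigma i k)%:R = \sum_(a < k.+1) \prod_(s : 'I_T)
     (if [&& (a <= s)%N, (s < k)%N, u s == i & sigma i s] then 0 else 1) :> rat.
Proof.
elim: k => [|k IH] hk.
  rewrite big_ord1 /= big1 // => s _.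
have IH' := IH (ltnW hk).
rewrite /=.
case: insubP => [t _ Ht|]; last by rewrite hk.
set c : rat := if (u t == i) && sigma i t then 0 else 1.
rewrite big_ord_recr /=.
rewrite [X in _ = _ + X]big1; last first.
  by move=> s _; case: (leqP k.+1 s) => h //=; rewrite ltnNge h.
rewrite (eq_bigr (fun a : 'I_k.+1 => (\prod_(s : 'I_T)
     (if [&& (a <= s)%N, (s < k)%N, u s == i & sigma i s] then 0 else 1)) * c)); last first.
  move=> a _ /=.
  rewrite (bigD1 t) //= [in RHS](bigD1 t) //= Ht ltnn /= andbF mul1r.
  have ha : (a <= k)%N by rewrite -ltnS.
  rewrite ha ltnSn /= mulrC; congr (_ * _).
  apply: eq_bigr => s hs.
  have : nat_of_ord s != k by rewrite -Ht; apply: contra hs => /eqP /val_inj ->.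
  by move=> /negbTE hs'; rewrite [(s < k.+1)%N]ltnS [(s <= k)%N]leq_eqVlt hs'.
rewrite -mulr_suml -IH' /c.
case: ((u t == i) && sigma i t); first by rewrite mulr0 add0r.
by rewrite mulr1 natr1.
Qed.

Hypothesis hN0 : (0 < N)%N.
Definition pp : rat := (N%:R - 1) / N%:R.

Lemma sumF (a t : nat) (s : 'I_T) :
  \sum_(y : 'I_N) (if [&& (a <= s)%N, (s < t)%N, y == i & sigma i s] then 0 else 1 : rat)
  = N%:R * (if [&& (a <= s)%N, (s < t)%N & sigma i s] then pp else 1).
Proof.
have hN : (N%:R : rat) != 0 by rewrite pnatr_eq0 -lt0n.
case: (boolP [&& (a <= s)%N, (s < t)%N & sigma i s]) => /= hc; last first.
  rewrite mulr1 (eq_bigr (fun _ => 1)); first by rewrite sumr_const card_ord.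
  move=> y _; case: ifP => //; move: hc.
  by case: (a <= s)%N; case: (s < t)%N; case: (y == i); case: (sigma i s).
move: hc => /and3P[-> -> ->]; rewrite (bigD1 i) //= eqxx /=.
rewrite (eq_bigr (fun _ => 1)); last by move=> y /negbTE ->.
rewrite sumr_const cardC1 card_ord add0r /pp mulrC -mulrA mulVf // mulr1.
by rewrite -subn1 natrB.
Qed.

Lemma cnt_rowf (a t : nat) : (a <= t)%N -> (t <= T)%N ->
  (\sum_(s : 'I_T) ([&& (a <= s)%N, (s < t)%N & sigma i s] : nat))%N = cnt rowf a t.
Proof.
move=> hat htT.
rewrite (eq_bigr (fun s : 'I_T => (((a <= s) && (s < t))%N && rowf s : nat))); last first.
  by move=> s _; rewrite rowfE andbA.
rewrite -(big_mkord xpredT (fun s => (((a <= s) && (s < t))%N && rowf s : nat))).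
rewrite (big_cat_nat (leq0n t) htT) (big_cat_nat (leq0n a) hat) /=.
rewrite [X in (X + _ + _)%N](eq_big_nat _ _ (F2 := fun _ => 0%N)); last first.
  by move=> s /andP[_ hs]; rewrite leqNgt hs.
rewrite [X in (_ + X)%N](eq_big_nat _ _ (F2 := fun _ => 0%N)); last first.
  by move=> s /andP[hs _]; rewrite ltnNge hs andbF.
rewrite !sum_nat_const_nat !muln0 add0n addn0 /cnt.
by apply: eq_big_nat => s /andP[-> ->].
Qed.

Lemma exp_ageE (t : 'I_T) :
  exp_age sigma i t = \sum_(a < t.+1) pp ^+ cnt rowf a t.
Proof.
have hN : (N%:R : rat) != 0 by rewrite pnatr_eq0 -lt0n.
rewrite /exp_age.
rewrite (eq_bigr (fun u : {ffun 'I_T -> 'I_N} => (N%:R^-1) ^+ T * \sum_(a < t.+1) \prod_(s : 'I_T)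
     (if [&& (a <= s)%N, (s < t)%N, u s == i & sigma i s] then 0 else 1))); last first.
  by move=> u _; rewrite age_sum // ltnW.
rewrite -mulr_sumr exchange_big /= mulr_sumr; apply: eq_bigr => a _.
set F := fun (s : 'I_T) (y : 'I_N) =>
  (if [&& (a <= s)%N, (s < t)%N, y == i & sigma i s] then 0 else 1 : rat).
rewrite -(bigA_distr_bigA F) /F.
rewrite (eq_bigr (fun s : 'I_T => N%:R * (if [&& (a <= s)%N, (s < t)%N & sigma i s] then pp else 1))); last first.
  by move=> s _; rewrite sumF.
rewrite big_split /= prodr_const card_ord mulrA -exprMn mulVf // expr1n mul1r.
rewrite (eq_bigr (fun s : 'I_T => pp ^+ ([&& (a <= s)%N, (s < t)%N & sigma i s] : nat))); last first.
  by move=> s _; case: ifP.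
rewrite prodrXr cnt_rowf //; first by rewrite -ltnS.
by apply: ltnW.
Qed.
End Prob.


Lemma exists_max_fin (X : finType) (P : pred X) (F : X -> rat) x0 : P x0 ->
  exists x, P x /\ forall y, P y -> F y <= F x.
Proof. move=> Px0; case: (arg_maxP F Px0) => x Px H; exists x; split => // y Py; exact: H. Qed.

Lemma insub_lt T (s:nat) (hs : (s < T)%N) : insub s = Some (Ordinal hs).
Proof. by rewrite insubT. Qed.

Lemma rowf_lt N T (sigma : 'M[bool]_(N, T)) i s (hs : (s < T)%N) :
  rowf sigma i s = sigma i (Ordinal hs).
Proof. by rewrite /rowf insub_lt. Qed.

Lemma two_false N (f : 'I_N -> bool) (x y : 'I_N) : x != y ->
  (\sum_(i < N) (~~ f i : nat) <= 1)%N -> f x || f y.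
Proof.
move=> hxy H; move: H; rewrite (bigD1 x) // (bigD1 y) /=; last by rewrite eq_sym.
by case: (f x); case: (f y) => //=; rewrite add1n ltnS => /=; rewrite ltnS leqn0 /= add1n.
Qed.

Lemma notAW_le (ws : nat -> nat -> bool) n s :
  (~~ AW ws n s <= \sum_(i < n) (~~ ws i s : nat))%N.
Proof.
elim: n => [|n IH]; first by rewrite /AW big_ord0.
rewrite /AW big_ord_recr /= -/(AW ws n s) big_ord_recr /=.
by case: (AW ws n s) IH; case: (ws n s) => //= IH; rewrite ?addn0 ?addn1 // ltnS leqW.
Qed.

Definition sI N T (j : 'I_N) (a b : nat) : 'M[bool]_(N, T) :=
  \matrix_(i, t) ~~ ((i == j) && ((a <= t) && (t < b))%N).

Lemma feas_sI N T (alpha : rat) K (j : 'I_N) a b :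
  alpha * T%:R = K%:R -> (a <= b)%N -> (b <= T)%N -> (b - a <= K)%N ->
  feasible alpha (sI T j a b).
Proof.
move=> hK hab hbT hbK; split.
  rewrite hK ler_nat (bigD1 j) //=.
  rewrite [X in (_ + X)%N](_ : _ = 0%N) ?addn0; last first.
    by apply: big1 => i /negbTE hi; apply: big1 => t _; rewrite mxE hi.
  rewrite (eq_bigr (fun t : 'I_T => (((a <= t) && (t < b))%N : nat))); last first.
    by move=> t _; rewrite mxE eqxx negbK.
  rewrite -(big_mkord xpredT (fun t => (((a <= t) && (t < b))%N : nat))).
  by rewrite window_count.
move=> t; rewrite (bigD1 j) //=.
rewrite [X in (_ + X)%N](_ : _ = 0%N) ?addn0; last first.
  by apply: big1 => i /negbTE hi; rewrite mxE hi.
by rewrite mxE eqxx negbK; case: (_ && _).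
Qed.

Theorem theorem1 (N T : nat) (alpha : rat)
  (hN : (2 <= N)%N) (hT : (0 < T)%N)
  (ha0 : 0 < alpha) (ha1 : alpha < 1)
  (haT : exists K : nat, alpha * T%:R = K%:R) :
  forall j : 'I_N,
  exists sigma : 'M[bool]_(N, T),
    [/\ feasible alpha sigma,
        (forall sigma' : 'M[bool]_(N, T), feasible alpha sigma' ->
           avg_age sigma' <= avg_age sigma)
      & exists a b : nat, forall (i : 'I_N) (t : 'I_T),
          ~~ sigma i t <-> (i = j /\ (a <= t < b)%N)].
Proof.
move=> j; have [K hK] := haT.
have hN0 : (0 < N)%N by apply: leq_trans hN.
set p := pp N.
have hNr : (N%:R : rat) != 0 by rewrite pnatr_eq0 -lt0n.
have hNp : (0 : rat) < N%:R by rewrite ltr0n.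
have p0 : 0 <= p.
  rewrite /p /pp divr_ge0 // ?ler0n // subr_ge0 ler1n //.
have p1 : p <= 1.
  rewrite /p /pp ler_pdivrMr // mul1r; lra.
have avgE : forall sigma : 'M[bool]_(N, T),
    avg_age sigma = T%:R^-1 * (N%:R^-1 * \sum_(i < N) Phi p T (rowf sigma i)).
  move=> sigma; rewrite /avg_age; congr (_ * _); rewrite -mulr_sumr; congr (_ * _).
  rewrite exchange_big; apply: eq_bigr => i _; apply: eq_bigr => t _.
  exact: exp_ageE.
set n := T.-1.
have eT : n.+1 = T by rewrite /n prednK.
have red : forall sigma' : 'M[bool]_(N, T), feasible alpha sigma' ->
    exists rho k, [/\ (rho + k <= n)%N, (k <= K)%N &
      avg_age sigma' <= avg_age (sI T j rho (rho + k))].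
  move=> sigma' [hf1 hf2].
  set fam := fun (i : nat) (s : nat) =>
    match (insub i : option 'I_N) with Some i' => rowf sigma' i' s | None => true end.
  have famE : forall (i : 'I_N) s, fam i s = rowf sigma' i s.
    by move=> i s; rewrite /fam valK.
  have disj : forall s, (s < T)%N -> forall i1 i2, (i1 < N)%N -> (i2 < N)%N -> i1 != i2 ->
      fam i1 s || fam i2 s.
    move=> s hs i1 i2 h1 h2 h12.
    rewrite /fam !insub_lt !rowf_lt.
    apply: (two_false (f := fun i => sigma' i (Ordinal hs))); last exact: hf2.
    by apply: contra h12 => /eqP [] ->.
  have Hm := merge p0 p1 disj.
  set W := AW fam N in Hm.
  have [rho [k [hrk hk HW]]] := interval_exists p0 p1 W n.
  rewrite eT in HW.
  exists rho, k; split => //.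
    have hc := cnt_compl W n.
    have -> : k = cnt (fun s => ~~ W s) 0 n by rewrite hk; move: hc; rewrite /Rk; lia.
    apply: (@leq_trans (\sum_(0 <= s < n) \sum_(i < N) (~~ fam i s : nat))%N).
      by apply: leq_sum => s _; apply: notAW_le.
    rewrite big_mkord exchange_big /=.
    have : (\sum_(i < N) \sum_(t < T) (~~ sigma' i t : nat) <= K)%N.
      by rewrite -(ler_nat rat) -hK.
    apply: leq_trans; apply: leq_sum => i _.
    rewrite -(big_mkord xpredT (fun s => (~~ fam i s : nat))).
    have hnT : (n <= T)%N by rewrite -eT leqnSn.
    rewrite (eq_bigr (fun t : 'I_T => (~~ fam i t : nat))); last by move=> t _; rewrite famE rowfE.
    rewrite -(big_mkord xpredT (fun s => (~~ fam i s : nat))) (big_cat_nat (leq0n n) hnT) /=.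
    exact: leq_addr.
  rewrite !avgE; apply: ler_wpM2l; first by rewrite invr_ge0 ler0n.
  apply: ler_wpM2l; first by rewrite invr_ge0 ler0n.
  have E1 : \sum_(i < N) Phi p T (rowf sigma' i) = \sum_(i < N) Phi p T (fam i).
    by apply: eq_bigr => i _; apply: Phi_eq => s; rewrite famE.
  have E2 : \sum_(i < N) Phi p T (rowf (sI T j rho (rho + k)) i) =
      Phi p T (fun s => ~~ ((rho <= s) && (s < rho + k))%N) +
      (N.-1)%:R * Phi p T (fun _ => true).
    rewrite (bigD1 j) //=; congr (_ + _).
      by apply: Phi_ext => s hs; rewrite rowf_lt mxE eqxx.
    rewrite (eq_bigr (fun _ => Phi p T (fun _ => true))).
      by rewrite sumr_const cardC1 card_ord mulr_natl.
    move=> i hi; apply: Phi_ext => s hs; rewrite rowf_lt mxE (negbTE hi) //.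
  have hNeq : (N%:R : rat) = (N.-1)%:R + 1 by rewrite natr1 prednK.
  rewrite hNeq mulrDl mul1r in Hm.
  rewrite E1 E2.
  set X := (N.-1)%:R * Phi p T (fun _ => true).
  set Y := Phi p T (fun _ => true).
  set Z := \sum_(i < N) Phi p T (fam i).
  move: Hm HW; rewrite /X /Y /Z; set Y1 := Phi p T xpredT; set Z1 := Phi p T W; set W1 := Phi p T (fun s => _); set X1 := (_ * Y1); move=> Hm HW.
  move: Hm; rewrite -addrA (addrC Y1) addrA lerD2r => Hm.
  by apply: (le_trans Hm); rewrite addrC lerD2r.
pose P := [pred x : 'I_T.+1 * 'I_T.+1 | ((x.1 <= x.2) && (x.2 - x.1 <= K))%N].
pose F := fun x : 'I_T.+1 * 'I_T.+1 => avg_age (sI T j x.1 x.2).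
have P0 : P (ord0, ord0) by rewrite /P /= subnn.
have [x [Px Hx]] := exists_max_fin F P0.
exists (sI T j x.1 x.2); split.
- move: Px => /andP[h1 h2]; apply: feas_sI hK h1 _ h2.
  by rewrite -ltnS (ltn_ord x.2).
- move=> sigma' hf; have [rho [k [hrk hkK Hle]]] := red sigma' hf.
  apply: (le_trans Hle).
  have h1 : (rho < T.+1)%N by rewrite ltnS -eT; apply: leqW; apply: leq_trans hrk; apply: leq_addr.
  have h2 : (rho + k < T.+1)%N by rewrite ltnS -eT; apply: leqW.
  have := Hx (inord rho, inord (rho + k)).
  rewrite /F /= !inordK //; apply.
  by rewrite leq_addr /= addKn.
- exists x.1, x.2 => i t; rewrite mxE negbK; split.
    by move=> /andP[/eqP -> h].
  by case=> -> h; rewrite eqxx h.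
Qed.
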